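(* Let $V$ be a complex vector space with inner products $\langle\cdot,\cdot\rangle_1,\langle\cdot,\cdot\rangle_2$ and induced norms $\|\cdot\|_1,\|\cdot\|_2$. The following are equivalent: (1) there is $c>0$ with $\langle\cdot,\cdot\rangle_2=c\langle\cdot,\cdot\rangle_1$; (2) there is $c>0$ with $\|\cdot\|_2=c\|\cdot\|_1$; (3) for all nonzero $x,y\in V$, the angle between $x$ and $y$ with respect to $\langle\cdot,\cdot\rangle_1$ equals that with respect to $\langle\cdot,\cdot\rangle_2$; (4) for all nonzero $x,y\in V$, the angle between $x,y$ with respect to $\langle\cdot,\cdot\rangle_1$ is $\pi/2$ iff it is $\pi/2$ with respect to $\langle\cdot,\cdot\rangle_2$ (i.e. $\mathrm{Re}\langle x,y\rangle_1=0\iff\mathrm{Re}\langle x,y\rangle_2=0$); (5) for all $x,y\in V$, $\langle x,y\rangle_1=0$ iff $\langle x,y\rangle_2=0$; (6) there exists $\theta_0\in(0,\pi)$ such that for all nonzero $x,y\in V$, the angle between $x$ and $y$ with respect to $\langle\cdot,\cdot\rangle_1$ is $\theta_0$ iff the angle between them with respect to $\langle\cdot,\cdot\rangle_2$ is $\theta_0$.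
   Context: Inner products are linear in the first argument and conjugate-linear in the second, with norm $\|x\|=\sqrt{\langle x,x\rangle}$. The (Euclidean) angle between nonzero vectors $x,y$ of a complex inner product space is the unique $\theta\in[0,\pi]$ with $\cos\theta=\mathrm{Re}\,\langle x,y\rangle/(\|x\|\|y\|)$. *)

(* Defs.v *)
From mathcomp Require Import all_boot all_order all_algebra.
From mathcomp Require Import complex.
From mathcomp Require Import all_classical all_reals all_analysis.
Set Implicit Arguments. Unset Strict Implicit. Unset Printing Implicit Defensive.
Import Order.TTheory GRing.Theory Num.Theory.
Local Open Scope ring_scope.
Local Open Scope complex_scope.

Definition reC (R : realType) (z : R[i]) : R := complex.Re z.

(* In R[i], [0 < z] means z is a positive real. *)
Definition is_inner_product (R : realType) (V : lmodType R[i])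
  (ip : V -> V -> R[i]) : Prop :=
  [/\ forall (a : R[i]) (x y z : V), ip (a *: x + y) z = a * ip x z + ip y z,
      forall x y : V, ip y x = (ip x y)^*
    & forall x : V, x != 0 -> 0 < ip x x].

Definition ipnorm (R : realType) (V : lmodType R[i]) (ip : V -> V -> R[i])
  (x : V) : R := Num.sqrt (reC (ip x x)).

Definition ipangle (R : realType) (V : lmodType R[i]) (ip : V -> V -> R[i])
  (x y : V) : R :=
  acos (reC (ip x y) / (ipnorm ip x * ipnorm ip y)).

(* Main.v *)
Require Import Defs.
From mathcomp Require Import all_boot all_order all_algebra.
From mathcomp Require Import complex.
From mathcomp Require Import all_classical all_reals all_analysis.
From mathcomp Require Import ring lra.
Set Implicit Arguments. Unset Strict Implicit. Unset Printing Implicit Defensive.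
Import Order.TTheory GRing.Theory Num.Theory.
Local Open Scope ring_scope.
Local Open Scope complex_scope.

Lemma ReD (R : realType) (a b : R[i]) : complex.Re (a + b) = complex.Re a + complex.Re b.
Proof. by case: a; case: b. Qed.
Lemma ImD (R : realType) (a b : R[i]) : complex.Im (a + b) = complex.Im a + complex.Im b.
Proof. by case: a; case: b. Qed.
Lemma ReM (R : realType) (a b : R[i]) : complex.Re (a * b) = complex.Re a * complex.Re b - complex.Im a * complex.Im b.
Proof. by case: a => ? ?; case: b => ? ? /=. Qed.
Lemma ImM (R : realType) (a b : R[i]) : complex.Im (a * b) = complex.Re a * complex.Im b + complex.Im a * complex.Re b.
Proof. by case: a => ? ?; case: b => ? ? /=. Qed.
Lemma ReJ (R : realType) (a : R[i]) : complex.Re (a^*) = complex.Re a.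
Proof. by case: a. Qed.
Lemma ImJ (R : realType) (a : R[i]) : complex.Im (a^*) = - complex.Im a.
Proof. by case: a. Qed.
Lemma ReC (R : realType) (a : R) : complex.Re (a%:C) = a. Proof. by []. Qed.
Lemma ImC (R : realType) (a : R) : complex.Im (a%:C) = 0. Proof. by []. Qed.
Lemma ReI (R : realType) : complex.Re ('i : R[i]) = 0. Proof. by []. Qed.
Lemma ImI (R : realType) : complex.Im ('i : R[i]) = 1. Proof. by []. Qed.
Lemma Re0 (R : realType) : complex.Re (0 : R[i]) = 0. Proof. by []. Qed.
Lemma ceqP (R : realType) (a b : R[i]) : complex.Re a = complex.Re b -> complex.Im a = complex.Im b -> a = b.
Proof. by case: a => ? ?; case: b => ? ? /= -> ->. Qed.

Section S.
Variables (R : realType) (V : lmodType R[i]) (ip : V -> V -> R[i]).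
Hypothesis H : is_inner_product ip.
Let g x y := reC (ip x y).

Lemma ipDl x y z : ip (x + y) z = ip x z + ip y z.
Proof. move: H; rewrite /is_inner_product => -[L _ _]. by have := L 1 x y z; rewrite scale1r mul1r. Qed.
Lemma ip0l z : ip 0 z = 0.
Proof. move: H; rewrite /is_inner_product => -[L _ _]. have := L (-1) 0 0 z. by rewrite scaler0 addr0 mulN1r addNr. Qed.
Lemma ipZl a x z : ip (a *: x) z = a * ip x z.
Proof. move: H; rewrite /is_inner_product => -[L _ _]. by have := L a x 0 z; rewrite addr0 ip0l addr0. Qed.
Lemma ipC x y : ip y x = (ip x y)^*.
Proof. by case: H. Qed.
Lemma ip0r z : ip z 0 = 0.
Proof. by rewrite ipC ip0l conjc0. Qed.
Lemma ipDr x y z : ip z (x + y) = ip z x + ip z y.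
Proof. by rewrite ipC ipDl rmorphD /= -!ipC. Qed.
Lemma ipZr a x z : ip z (a *: x) = a^* * ip z x.
Proof. by rewrite ipC ipZl rmorphM /= -ipC. Qed.
Lemma gC x y : g x y = g y x.
Proof. by rewrite /g /reC ipC ReJ. Qed.
Lemma gpos x : x != 0 -> 0 < g x x.
Proof. move: H; rewrite /is_inner_product => -[_ _ P] /P. by rewrite ltcE /= => /andP[]. Qed.
Lemma ImIm x : complex.Im (ip x x) = 0.
Proof. have := ipC x x. case: (ip x x) => a b /= [] /eqP. rewrite -subr_eq0 opprK -mulr2n mulrn_eq0 /=.
by move/eqP. Qed.
Lemma gge0 x : 0 <= g x x.
Proof. have [->|/gpos/ltW //] := eqVneq x 0. by rewrite /g ip0l. Qed.
Lemma g0l z : g 0 z = 0. Proof. by rewrite /g ip0l. Qed.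
Lemma g0r z : g z 0 = 0. Proof. by rewrite /g ip0r. Qed.
Lemma gDl x y z : g (x + y) z = g x z + g y z.
Proof. by rewrite /g /reC ipDl ReD. Qed.
Lemma gZl (a : R) x z : g (a%:C *: x) z = a * g x z.
Proof. by rewrite /g /reC ipZl ReM ReC ImC mul0r subr0. Qed.
Lemma gDr x y z : g z (x + y) = g z x + g z y.
Proof. by rewrite gC gDl !(gC z). Qed.
Lemma gZr (a : R) x z : g z (a%:C *: x) = a * g z x.
Proof. by rewrite gC gZl gC. Qed.
Lemma Im_g x y : complex.Im (ip x y) = g x ('i *: y).
Proof. rewrite /g /reC ipZr ReM /=. lra. Qed.
Lemma nsq x : ipnorm ip x ^+ 2 = g x x.
Proof. by rewrite /ipnorm sqr_sqrtr // gge0. Qed.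
Lemma nge0 x : 0 <= ipnorm ip x. Proof. exact: sqrtr_ge0. Qed.
Lemma npos x : x != 0 -> 0 < ipnorm ip x.
Proof. by move/gpos => h; rewrite /ipnorm sqrtr_gt0. Qed.

Lemma CS x y : g x y ^+ 2 <= g x x * g y y.
Proof.
have [->|yn0] := eqVneq y 0; first by rewrite g0r g0r mulr0 expr0n.
set l := g x y / g y y.
have := gge0 (x + (- l)%:C *: y).
rewrite !(gDl, gDr, gZl, gZr) (gC y x).
have yp := gpos yn0.
rewrite /l => h.
have h2 := mulr_ge0 (ltW yp) h.
set E := (X in 0 <= _ * X) in h2.
have e : g y y * E = g x x * g y y - g x y ^+ 2.
  by rewrite /E; field; rewrite gt_eqF.
by rewrite e subr_ge0 in h2.
Qed.

Lemma ratio_in x y : -1 <= g x y / (ipnorm ip x * ipnorm ip y) <= 1.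
Proof.
set N := ipnorm ip x * ipnorm ip y.
have N0 : 0 <= N by rewrite mulr_ge0 // nge0.
have [->|Np] := eqVneq N 0; first by rewrite invr0 mulr0 lerN10 ler01.
have Np' : 0 < N by rewrite lt_def Np N0.
have cs : g x y ^+ 2 <= N ^+ 2 by rewrite exprMn !nsq CS.
set r := g x y / N.
have e : g x y = r * N by rewrite /r mulfVK.
rewrite e exprMn in cs.
have r1 : r ^+ 2 <= 1.
  by rewrite -(ler_pM2r (exprn_gt0 2 Np')) mul1r.
apply/andP; split; nra.
Qed.

Lemma angle_eq x y t : 0 <= t <= pi ->
  (ipangle ip x y = t <-> g x y / (ipnorm ip x * ipnorm ip y) = cos t).
Proof.
move=> ht; rewrite /ipangle; split.
  by move=> <-; rewrite acosK // in_itv /= ratio_in.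
by move=> ->; rewrite cosK // in_itv /= ht.
Qed.
End S.
Lemma alg (R : realType) (t s p q A b D : R) : t^+2 + s^+2 = 1 -> 0 < s -> 0 < p -> 0 < q -> 0 < A ->
  (t * q * A + s * p * b)^+2 = t^+2  *  A  *  ((t * q)^+2 * A + 2  *  (t * q) * (s * p) * b + (s * p)^+2  *  D) ->
  (t * q * A + (-s) * p * b)^+2 = t^+2  *  A  *  ((t * q)^+2 * A + 2  *  (t * q) * ((-s) * p) * b + ((-s) * p)^+2  *  D) ->
  b = 0.
Proof.
move=> ts sp pp qp Ap E1 E2.
have h : (t  *  b)  *  (4  *  q  *  s  *  p  *  A  *  s^+2) = 0.
  have -> : 4  *  q  *  s  *  p  *  A  *  s^+2 = 4  *  q  *  s  *  p  *  A  *  (1 - t^+2) by rewrite -ts; ring.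
  have := E1; have := E2. move=> e2 e1.
  have : (t * q * A + s * p * b)^+2 - (t * q * A + (-s) * p * b)^+2 = t^+2  *  A  *  ((t * q)^+2 * A + 2  *  (t * q) * (s * p) * b + (s * p)^+2  *  D) - t^+2  *  A  *  ((t * q)^+2 * A + 2  *  (t * q) * ((-s) * p) * b + ((-s) * p)^+2  *  D) by rewrite e1 e2.
  move=> e. rewrite -[RHS](subrr ((t * q * A + s * p * b)^+2 - (t * q * A + (- s) * p * b)^+2)). rewrite {2}e. ring.
have nz : 4 * q * s * p * A * s^+2 != 0 by rewrite gt_eqF // !mulr_gt0 // exprn_gt0.
move/eqP: h; rewrite mulf_eq0 (negbTE nz) orbF.
rewrite mulf_eq0 => /orP[/eqP t0|/eqP //].
move: E1; rewrite t0 !(mul0r, expr0n, add0r) /= => /eqP.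
rewrite sqrf_eq0 !mulf_eq0 => /orP[/orP[]|] /eqP; lra.
Qed.

Section M.
Variables (R : realType) (V : lmodType R[i]) (ip1 ip2 : V -> V -> R[i]).
Hypotheses (H1 : is_inner_product ip1) (H2 : is_inner_product ip2).

Definition P1 := exists c : R, 0 < c /\ forall x y : V, ip2 x y = c%:C * ip1 x y.


Lemma fullk k : (forall x y, reC (ip2 x y) = k * reC (ip1 x y)) ->
  forall x y, ip2 x y = k%:C * ip1 x y.
Proof.
move=> h x y; apply: ceqP.
  by rewrite ReM ReC ImC mul0r subr0; exact: h.
by rewrite ImM ReC ImC mul0r addr0 (Im_g H1) (Im_g H2); exact: h.
Qed.

Lemma ipR (ip : V -> V -> R[i]) (H : is_inner_product ip) x : ip x x = (reC (ip x x))%:C.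
Proof. by apply: ceqP => //=; rewrite (ImIm H). Qed.

Lemma step1 (HL : forall x y, x != 0 -> reC (ip2 y x) * reC (ip1 x x) = reC (ip2 x x) * reC (ip1 y x))
  x z : reC (ip1 x z) != 0 -> reC (ip2 x x) * reC (ip1 z z) = reC (ip2 z z) * reC (ip1 x x).
Proof.
move=> u0.
have xn : x != 0 by apply: contraNneq u0 => ->; rewrite (g0l H1).
have zn : z != 0 by apply: contraNneq u0 => ->; rewrite (g0r H1).
have e1 := HL x z xn. have e2 := HL z x zn.
rewrite (gC H1 z x) (gC H2 z x) in e1.
apply: (mulIf u0).
have -> : reC (ip2 x x) * reC (ip1 z z) * reC (ip1 x z) = reC (ip1 z z) * (reC (ip2 x x) * reC (ip1 x z)) by ring.
have -> : reC (ip2 z z) * reC (ip1 x x) * reC (ip1 x z) = reC (ip1 x x) * (reC (ip2 z z) * reC (ip1 x z)) by ring.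
by rewrite -e1 -e2; ring.
Qed.

Lemma Lmain (HL : forall x y, x != 0 -> reC (ip2 y x) * reC (ip1 x x) = reC (ip2 x x) * reC (ip1 y x)) : P1.
Proof.
have st2 : forall x z, x != 0 -> z != 0 ->
    reC (ip2 x x) * reC (ip1 z z) = reC (ip2 z z) * reC (ip1 x x).
  move=> x z xn zn.
  have [u0|u0] := eqVneq (reC (ip1 x z)) 0; last exact: step1.
  have a1 : reC (ip1 x (x + z)) != 0 by rewrite (gDr H1) u0 addr0 gt_eqF // (gpos H1).
  have a2 : reC (ip1 z (x + z)) != 0 by rewrite (gDr H1) (gC H1 z x) u0 add0r gt_eqF // (gpos H1).
  have wn : x + z != 0 by apply: contraNneq a1 => ->; rewrite (g0r H1).
  have e1 := step1 HL a1. have e2 := step1 HL a2.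
  have W := gpos H1 wn.
  apply: (mulIf (lt0r_neq0 W)).
  set W1 := reC (ip1 (x + z) (x + z)) in e1 e2 *.
  have -> : reC (ip2 x x) * reC (ip1 z z) * W1 = reC (ip1 z z) * (reC (ip2 x x) * W1) by ring.
  have -> : reC (ip2 z z) * reC (ip1 x x) * W1 = reC (ip1 x x) * (reC (ip2 z z) * W1) by ring.
  by rewrite e1 e2; ring.
case: (pselect (exists x0 : V, x0 != 0)) => [[x0 x0n]|nex]; last first.
  have all0 : forall x : V, x = 0.
    by move=> x; apply/eqP; apply/negPn/negP => xn; apply: nex; exists x.
  exists 1; split => // x y; by rewrite (all0 x) (ip0l H1) (ip0l H2) mulr0.
have A1 := gpos H1 x0n. have A2 := gpos H2 x0n.
exists (reC (ip2 x0 x0) / reC (ip1 x0 x0)); split; first by rewrite divr_gt0.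
apply: fullk => y x.
have [->|xn] := eqVneq x 0; first by rewrite (g0r H1) (g0r H2) mulr0.
have e := HL x y xn. have f := st2 x x0 xn x0n.
have X1 := gpos H1 xn.
apply: (mulIf (lt0r_neq0 X1)); rewrite e.
apply: (mulIf (lt0r_neq0 A1)).
have -> : reC (ip2 x0 x0) / reC (ip1 x0 x0) * reC (ip1 y x) * reC (ip1 x x) * reC (ip1 x0 x0)
  = reC (ip2 x0 x0) * reC (ip1 x x) * reC (ip1 y x).
  by field; rewrite gt_eqF.
by rewrite -f; ring.
Qed.


Definition P2 := exists c : R, 0 < c /\ forall x : V, ipnorm ip2 x = c * ipnorm ip1 x.
Definition P3 := forall x y : V, x != 0 -> y != 0 -> ipangle ip1 x y = ipangle ip2 x y.
Definition OrthR := forall w x : V, reC (ip1 w x) = 0 -> reC (ip2 w x) = 0.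

Lemma p1p2 : P1 -> P2.
Proof.
move=> [c [cp e]]; exists (Num.sqrt c); split; first by rewrite sqrtr_gt0.
by move=> x; rewrite /ipnorm e /reC ReM ReC ImC mul0r subr0 sqrtrM // ltW.
Qed.

Lemma pol (ip : V -> V -> R[i]) (H : is_inner_product ip) x y :
  reC (ip (x + y) (x + y)) = reC (ip x x) + 2 * reC (ip x y) + reC (ip y y).
Proof. rewrite (gDl H) !(gDr H) (gC H y x); ring. Qed.

Lemma p2p1 : P2 -> P1.
Proof.
move=> [c [cp e]]; exists (c ^+ 2); split; first by rewrite exprn_gt0.
have sq : forall x, reC (ip2 x x) = c ^+ 2 * reC (ip1 x x).
  by move=> x; rewrite -(nsq H2) -(nsq H1) e exprMn.
apply: fullk => x y.
have := pol H2 x y; rewrite !sq pol // => h.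
lra.
Qed.

Lemma p1p3 : P1 -> P3.
Proof.
move=> [c [cp e]].
have en : forall x, ipnorm ip2 x = Num.sqrt c * ipnorm ip1 x.
  by move=> x; rewrite /ipnorm e /reC ReM ReC ImC mul0r subr0 sqrtrM // ltW.
move=> x y _ _; rewrite /ipangle; congr acos.
rewrite !en e /reC ReM ReC ImC mul0r subr0.
have -> : Num.sqrt c * ipnorm ip1 x * (Num.sqrt c * ipnorm ip1 y)
   = (Num.sqrt c * Num.sqrt c) * (ipnorm ip1 x * ipnorm ip1 y) by ring.
rewrite -expr2 sqr_sqrtr ?ltW //.
have cc : forall a N : R, c * a / (c * N) = a / N.
  by move=> a N; rewrite invfM mulrACA mulfV ?mul1r // gt_eqF.
by rewrite cc.
Qed.

Definition HLh := forall x y : V, x != 0 -> reC (ip2 y x) * reC (ip1 x x) = reC (ip2 x x) * reC (ip1 y x).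

Lemma orth_HL : OrthR -> HLh.
Proof.
move=> O x y xn.
have := O ((reC (ip1 x x))%:C *: y + (- reC (ip1 y x))%:C *: x) x.
rewrite !(gDl H1, gZl H1) !(gDl H2, gZl H2) => h.
have := h ltac:(ring). move=> h2. lra.
Qed.

Lemma pihalf_in : 0 <= (pi : R) / 2 <= (pi : R).
Proof. have := @pi_gt0 R => p; apply/andP; split; lra. Qed.

Lemma p4orth : (forall x y : V, x != 0 -> y != 0 ->
                (ipangle ip1 x y = pi / 2 <-> ipangle ip2 x y = pi / 2)) -> OrthR.
Proof.
move=> h w x e.
have [->|wn] := eqVneq w 0; first by rewrite (g0l H2).
have [->|xn] := eqVneq x 0; first by rewrite (g0r H2).
have a1 : ipangle ip1 w x = pi / 2.
  by apply/(angle_eq H1 _ _ pihalf_in); rewrite e mul0r cos_pihalf.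
have := (h w x wn xn).1 a1 => /(angle_eq H2 _ _ pihalf_in).
rewrite cos_pihalf => /eqP; rewrite mulf_eq0 invr_eq0 mulf_eq0 (gt_eqF (npos H2 wn)) (gt_eqF (npos H2 xn)) !orbF.
by move/eqP.
Qed.

Lemma p5HL : (forall x y : V, ip1 x y = 0 <-> ip2 x y = 0) -> HLh.
Proof.
move=> h x y xn.
have e1 : ip1 (ip1 x x *: y + (- ip1 y x) *: x) x = 0.
  by rewrite (ipDl H1) !(ipZl H1); ring.
have := (h _ _).1 e1; rewrite (ipDl H2) !(ipZl H2) (ipR H1 x) (ipR H2 x) => /(congr1 (@complex.Re R)).
rewrite ReD !ReM /= !mul0r !subr0 => e2.
rewrite /reC. lra.
Qed.

Lemma p6orth : (exists theta0 : R, 0 < theta0 < pi /\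
                forall x y : V, x != 0 -> y != 0 ->
                  (ipangle ip1 x y = theta0 <-> ipangle ip2 x y = theta0)) -> OrthR.
Proof.
move=> [th [thp h6]] w x e.
have [->|wn] := eqVneq w 0; first by rewrite (g0l H2).
have [->|xn] := eqVneq x 0; first by rewrite (g0r H2).
have thin : 0 <= th <= pi by case/andP: thp => a b; apply/andP; split; apply: ltW.
set t := cos th; set s := sin th.
have sp : 0 < s by apply: sin_gt0_pi.
have ts : t ^+ 2 + s ^+ 2 = 1 by rewrite /s /t sin2cos2; ring.
set p := ipnorm ip1 x; set q := ipnorm ip1 w.
have pp : 0 < p by apply: npos.
have qp : 0 < q by apply: npos.
set A := reC (ip2 x x); set b := reC (ip2 w x); set D := reC (ip2 w w).
have key : forall sg : R, sg ^+ 2 = s ^+ 2 ->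
  (t * q * A + sg * p * b) ^+ 2 = t ^+ 2 * A * ((t * q) ^+ 2 * A + 2 * (t * q) * (sg * p) * b + (sg * p) ^+ 2 * D).
  move=> sg sg2.
  set z := (t * q)%:C *: x + (sg * p)%:C *: w.
  have X1 : reC (ip1 x x) = p ^+ 2 by rewrite nsq.
  have W1 : reC (ip1 w w) = q ^+ 2 by rewrite nsq.
  have g1zx : reC (ip1 z x) = t * q * p ^+ 2.
    by rewrite /z (gDl H1) !(gZl H1) e X1 mulr0 addr0.
  have g1zz : reC (ip1 z z) = (p * q) ^+ 2.
    rewrite /z (gDl H1) !(gDr H1) !(gZl H1) !(gZr H1) (gC H1 x w) e X1 W1.
    have -> : t * q * (t * q * p ^+ 2) + t * q * (sg * p * 0) +
  (sg * p * (t * q * 0) + sg * p * (sg * p * q ^+ 2))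
      = (p * q) ^+ 2 * (t ^+ 2 + sg ^+ 2) by ring.
    by rewrite sg2 ts mulr1.
  have n1z : ipnorm ip1 z = p * q.
    by rewrite /ipnorm g1zz sqrtr_sqr ger0_norm // mulr_ge0 // ltW.
  have zn : z != 0.
    apply/negP => /eqP z0; move: g1zz; rewrite z0 (g0l H1) => /eqP.
    by rewrite eq_sym sqrf_eq0 mulf_eq0 !gt_eqF.
  have a1 : ipangle ip1 z x = th.
    apply/(angle_eq H1 _ _ thin); rewrite g1zx n1z -/p -/t.
    by field; rewrite !gt_eqF.
  have := (h6 z x zn xn).1 a1 => /(angle_eq H2 _ _ thin); rewrite -/t => r2.
  have N2z := npos H2 zn; have N2x := npos H2 xn.
  have e2 : reC (ip2 z x) = t * (ipnorm ip2 z * ipnorm ip2 x).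
    by rewrite -r2 mulfVK // mulf_neq0 // gt_eqF.
  have hsq : reC (ip2 z x) ^+ 2 = t ^+ 2 * A * reC (ip2 z z).
    by rewrite e2 !exprMn !(nsq H2) -/A; ring.
  have ex1 : reC (ip2 z x) = t * q * A + sg * p * b.
    by rewrite /z (gDl H2) !(gZl H2).
  have ex2 : reC (ip2 z z) = (t * q) ^+ 2 * A + 2 * (t * q) * (sg * p) * b + (sg * p) ^+ 2 * D.
    rewrite /z (gDl H2) !(gDr H2) !(gZl H2) !(gZr H2) (gC H2 x w) -/A -/b -/D; ring.
  by rewrite -ex1 -ex2.
apply: (alg ts sp pp qp (gpos H2 xn)).
  exact: key.
by apply: key; rewrite sqrrN.
Qed.
End M.

Theorem mainTheorem10 (R : realType) (V : lmodType R[i])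
  (ip1 ip2 : V -> V -> R[i]) :
  is_inner_product ip1 -> is_inner_product ip2 ->
  [<->
    (* (1) *) exists c : R, 0 < c /\ forall x y : V, ip2 x y = c%:C * ip1 x y;
    (* (2) *) exists c : R, 0 < c /\ forall x : V, ipnorm ip2 x = c * ipnorm ip1 x;
    (* (3) *) forall x y : V, x != 0 -> y != 0 -> ipangle ip1 x y = ipangle ip2 x y;
    (* (4) *) forall x y : V, x != 0 -> y != 0 ->
                (ipangle ip1 x y = pi / 2 <-> ipangle ip2 x y = pi / 2);
    (* (5) *) forall x y : V, ip1 x y = 0 <-> ip2 x y = 0;
    (* (6) *) exists theta0 : R, 0 < theta0 < pi /\
                forall x y : V, x != 0 -> y != 0 ->
                  (ipangle ip1 x y = theta0 <-> ipangle ip2 x y = theta0)].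
Proof.
move=> H1 H2.
have p15 : P1 ip1 ip2 -> forall x y : V, ip1 x y = 0 <-> ip2 x y = 0.
  by move=> [c [cp e]] x y; rewrite e; split => [->|/eqP]; rewrite ?mulr0 // mulf_eq0 => /orP[/eqP [] /eqP|/eqP //]; rewrite gt_eqF.
have p16 : P1 ip1 ip2 -> exists theta0 : R, 0 < theta0 < pi /\
                forall x y : V, x != 0 -> y != 0 ->
                  (ipangle ip1 x y = theta0 <-> ipangle ip2 x y = theta0).
  move=> hp; exists (pi / 2); split.
    have := @pi_gt0 R => pp; apply/andP; split; lra.
  by move=> x y xn yn; rewrite (p1p3 hp xn yn).
tfae.
- exact: p1p2.
- by move=> h; apply: p1p3; apply: p2p1.
- by move=> h x y xn yn; rewrite h.
- by move=> h; apply: p15; exact: (Lmain H1 H2 (orth_HL H1 H2 (p4orth H1 H2 h))).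
- by move=> h; apply: p16; exact: (Lmain H1 H2 (p5HL H1 H2 h)).
- by move=> h; exact: (Lmain H1 H2 (orth_HL H1 H2 (p6orth H1 H2 h))).
Qed.
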